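(* Let $d\ge2$, $n\ge1$, $N=nd$, $F\in[0,1)$ with $F\neq2^{-N}$, and let $\rho_x=U(x)\rho_0U(x)^\dagger$ where $\rho_0$ is the $N$-qubit depolarized GHZ state with fidelity $F$. Let $M=\sigma_x^{\otimes N}$ and, for $x$ with $v_1\cdot\nabla_x\langle M\rangle\ne0$, define $$\mathrm{Var}_M(x)=\frac{\langle M^2\rangle-\langle M\rangle^2}{\big|v_1\cdot\nabla_x\langle M\rangle\big|^2},\qquad \langle A\rangle=\mathrm{Tr}(\rho_xA),\ v_1=\tfrac1{\sqrt d}(1,\dots,1)^T.$$ Then, with $\theta_1=v_1^Tx$ and $c=F-\frac{1-F}{2^N-1}$, $$\mathrm{Var}_M(x)=\frac{1-c^2\cos^2(n\sqrt d\,\theta_1)}{d\,n^2c^2\sin^2(n\sqrt d\,\theta_1)},$$ and in particular $\mathrm{Var}_M(x)\to+\infty$ as $x\to0$.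
   Context: Setting: $d$ nodes with $n$ qubits each, qubits labelled $(i,k)$; $U(x)=\exp[-i\sum_{i=0}^{d-1}x_iH_i]$ with $H_i=\frac12\sum_{k=0}^{n-1}\sigma_z^{(i,k)}$, $x\in\mathbb{R}^d$. The $N$-qubit depolarized GHZ state with fidelity $F$ is $F|\mathrm{GHZ}_N\rangle\langle\mathrm{GHZ}_N|+\frac{1-F}{2^N-1}(I-|\mathrm{GHZ}_N\rangle\langle\mathrm{GHZ}_N|)$, $|\mathrm{GHZ}_N\rangle=(|0\cdots0\rangle+|1\cdots1\rangle)/\sqrt2$. $\mathrm{Var}_M$ is the error-propagation estimation variance for $\theta_1$ from measuring $M$. *)

(* Defs.v *)
From mathcomp Require Import all_boot all_order all_algebra all_classical all_reals all_analysis.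
Set Implicit Arguments. Unset Strict Implicit. Unset Printing Implicit Defensive.
Import Order.TTheory GRing.Theory Num.Theory.
From mathcomp Require Import complex.
Local Open Scope ring_scope.
Local Open Scope complex_scope.

Section QDefs.
Variable R : realType.
Variables d n : nat.

(* Computational basis of the N = n*d qubits labelled (i,k), i < d, k < n:
   a basis state assigns a bit to every qubit (false = |0>, true = |1>). *)
Definition qbasis := {ffun 'I_d * 'I_n -> bool}.

Definition Op := qbasis -> qbasis -> R[i].

Definition opmul (A B : Op) : Op := fun s t => \sum_(u : qbasis) A s u * B u t.
Definition opadj (A : Op) : Op := fun s t => (A t s)^*.
Definition opid : Op := fun s t => if s == t then 1 else 0.
Definition optr (A : Op) : R[i] := \sum_(s : qbasis) A s s.

(* eigenvalue of sigma_z on |b> *)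
Definition zval (b : bool) : R := if b then -1 else 1.

(* H_i = 1/2 sum_k sigma_z^(i,k) is diagonal in the computational basis,
   with eigenvalue Hval i s on |s>. *)
Definition Hval (i : 'I_d) (s : qbasis) : R := 2^-1 * \sum_(k < n) zval (s (i, k)).

(* U(x) = exp[-i sum_i x_i H_i]; since the H_i are commuting diagonal
   operators, U(x) is the diagonal operator with phases exp(-i sum_i x_i Hval i s). *)
Definition expi (t : R) : R[i] := (cos t)%:C + 'i * (sin t)%:C.
Definition Uop (x : 'rV[R]_d) : Op :=
  fun s t => if s == t then expi (- \sum_(i < d) x 0 i * Hval i s) else 0.

Definition ghz (s : qbasis) : R[i] :=
  if (s == [ffun => false]) || (s == [ffun => true])
  then ((Num.sqrt (2 : R))^-1)%:C else 0.
Definition ghzproj : Op := fun s t => ghz s * (ghz t)^*.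

Definition rho0 (F : R) : Op :=
  fun s t => F%:C * ghzproj s t
             + ((1 - F) / ((2 ^ (n * d))%:R - 1))%:C * (opid s t - ghzproj s t).

Definition rhox (F : R) (x : 'rV[R]_d) : Op :=
  opmul (opmul (Uop x) (rho0 F)) (opadj (Uop x)).

(* M = sigma_x^{tensor N}: flips every qubit *)
Definition Mop : Op := fun s t => if t == [ffun q => ~~ s q] then 1 else 0.

(* <A> = Tr(rho_x A)  (real part; it is real for Hermitian A) *)
Definition expect (F : R) (A : Op) (x : 'rV[R]_d) : R := Re (optr (opmul (rhox F x) A)).

Definition partial (f : 'rV[R]_d -> R) (x : 'rV[R]_d) (i : 'I_d) : R :=
  derive1 (fun t : R => f (x + t *: delta_mx 0 i)) 0.
Definition v1 : 'rV[R]_d := const_mx (Num.sqrt (d%:R : R))^-1.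
Definition dirgrad (v : 'rV[R]_d) (f : 'rV[R]_d -> R) (x : 'rV[R]_d) : R :=
  \sum_(i < d) v 0 i * partial f x i.

Definition VarM (F : R) (x : 'rV[R]_d) : R :=
  (expect F (opmul Mop Mop) x - (expect F Mop x) ^+ 2)
  / (`| dirgrad v1 (expect F Mop) x | ^+ 2).

Definition theta1 (x : 'rV[R]_d) : R := \sum_(i < d) v1 0 i * x 0 i.

End QDefs.

(* Main.v *)
Require Import Defs.
From mathcomp Require Import all_boot all_order all_algebra all_classical all_reals all_analysis.
Import Order.TTheory GRing.Theory Num.Theory.
Import numFieldNormedType.Exports.
From mathcomp Require Import complex.
From mathcomp Require Import ring lra.
Local Open Scope ring_scope.

Lemma deriv_cos_aff (R: realType) (c k S : R) :
  derive1 (fun t : R => c * cos (k * (S + t))) 0 = - (c * k * sin (k * S)).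
Proof.
have hg : is_derive (0:R) 1 (k \*: (cst S + id)) (k * (0 + 1)).
  apply: is_deriveZ.
have hc := is_derive1_comp (is_derive_cos ((k \*: (cst S + id)) 0)) hg.
have h := is_deriveZ c hc.
rewrite derive1E.
have -> : (fun t => c * cos (k * (S + t))) = c \*: (cos \o (k \*: (cst S + id))) by apply/funext.
rewrite (@derive_val _ _ _ _ _ _ _ h) /=.
have -> : (cst S + id) 0 = S + 0 :> R by [].
rewrite addr0 /GRing.scale /=. ring.
Qed.

Local Open Scope complex_scope.
Lemma cplx_mul (R : realType) (a b c e : R) : (Complex a b) * (Complex c e) = Complex (a*c - b*e) (a*e + b*c).
Proof. reflexivity. Qed.
Lemma cplx_add (R : realType) (a b c e : R) : (Complex a b) + (Complex c e) = Complex (a+c) (b+e).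
Proof. reflexivity. Qed.
Lemma cplx_C (R : realType) (a : R) : a%:C = Complex a 0.
Proof. reflexivity. Qed.
Lemma cplx_conj (R : realType) (a b : R) : conjc (Complex a b) = Complex a (-b).
Proof. reflexivity. Qed.
Lemma expiE (R : realType) (t : R) : expi t = Complex (cos t) (sin t).
Proof. rewrite /expi !cplx_C cplx_mul cplx_add. congr Complex; ring. Qed.

Lemma expi_conj (R : realType) (t : R) : expi t * conjc (expi t) = 1.
Proof.
rewrite expiE cplx_conj cplx_mul.
have h := cos2Dsin2 t.
have -> : (1 : R[i]) = Complex 1 0 by [].
congr Complex; last by ring.
by rewrite -h; ring.
Qed.

Lemma Re_two (R : realType) (a b k : R) :
  Re (expi a * k%:C * conjc (expi b) + expi b * k%:C * conjc (expi a)) = 2 * k * cos (a - b).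
Proof.
rewrite !expiE !cplx_conj !cplx_C !cplx_mul cplx_add /= cosB. ring.
Qed.

Lemma sum_diagl (T : finType) (K : ringType) (s : T) (a : K) (f : T -> K) :
  \sum_(u : T) (if s == u then a else 0) * f u = a * f s.
Proof.
rewrite (bigD1 s) //= eqxx big1 ?addr0 // => u /negbTE; rewrite eq_sym => ->.
by rewrite mul0r.
Qed.

Lemma sum_diagr (T : finType) (K : ringType) (t : T) (f g : T -> K) :
  \sum_(u : T) f u * (if u == t then g u else 0) = f t * g t.
Proof.
rewrite (bigD1 t) //= eqxx big1 ?addr0 // => u /negbTE ->.
by rewrite mulr0.
Qed.

Lemma sum_two (T : finType) (V : nmodType) (a b : T) (f : T -> V) :
  a != b -> (forall s, s != a -> s != b -> f s = 0) -> \sum_s f s = f a + f b.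
Proof.
move=> ab H; rewrite (bigD1 a) //= (bigD1 b) /=; last by rewrite eq_sym.
rewrite big1 ?addr0 // => s /andP[sa sb]; exact: H.
Qed.

Definition flip (d n : nat) (s : qbasis d n) : qbasis d n := [ffun q => ~~ s q].
Definition z0 (d n : nat) : qbasis d n := [ffun => false].
Definition z1 (d n : nat) : qbasis d n := [ffun => true].
Definition phi (R : realType) (d n : nat) (x : 'rV[R]_d) (s : qbasis d n) : R :=
  \sum_(i < d) x 0 i * Hval R i s.

Arguments flip {d n}.
Arguments z0 {d n}.
Arguments z1 {d n}.
Arguments phi {R d n}.

Lemma flipK d n (s : qbasis d n) : flip (flip s) = s.
Proof. by apply/ffunP => q; rewrite !ffunE negbK. Qed.

Lemma flip_eq d n (s u : qbasis d n) : (s == flip u) = (u == flip s).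
Proof. by apply/eqP/eqP => ->; rewrite flipK. Qed.

Lemma MopE (R : realType) d n (s t : qbasis d n) :
  Mop R s t = if t == flip s then 1 else 0.
Proof. by []. Qed.

Lemma rhoxE (R : realType) d n (F : R) (x : 'rV[R]_d) (s t : qbasis d n) :
  rhox F x s t = expi (- phi x s) * rho0 F s t * conjc (expi (- phi x t)).
Proof.
rewrite /rhox /opmul /opadj /Uop.
under eq_bigr => u _ do rewrite sum_diagl.
have hc : forall (b : bool) (e : R[i]), conjc (if b then e else 0) = if b then conjc e else 0.
  by case => e //; rewrite -[0 : R[i]]/(Complex 0 0) cplx_conj oppr0.
under eq_bigr => u _ do rewrite hc (eq_sym t u).
by rewrite sum_diagr.
Qed.

Lemma opmulM (R : realType) d n (A : Op R d n) (s : qbasis d n) :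
  opmul A (@Mop R d n) s s = A s (flip s).
Proof.
rewrite /opmul.
under eq_bigr => u _ do rewrite MopE flip_eq.
by rewrite sum_diagr mulr1.
Qed.

Lemma MopMop (R : realType) d n : opmul (@Mop R d n) (@Mop R d n) = @opid R d n.
Proof.
apply/funext => s; apply/funext => t.
rewrite /opmul.
under eq_bigr => u _ do rewrite mulrC (@MopE R d n s u).
by rewrite sum_diagr mulr1 MopE flipK /opid eq_sym.
Qed.

Lemma opmul_id (R : realType) d n (A : Op R d n) (s : qbasis d n) :
  opmul A (@opid R d n) s s = A s s.
Proof. by rewrite /opmul /opid; under eq_bigr => u _ do rewrite -/(@opid R d n u s); rewrite sum_diagr mulr1. Qed.

Lemma cplx_opp (R : realType) (a b : R) : - (Complex a b) = Complex (-a) (-b).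
Proof. reflexivity. Qed.
Lemma conjE (R : realType) (x : R[i]) : Num.conj x = conjc x.
Proof. reflexivity. Qed.
Lemma cplx_CM (R : realType) (a b : R) : a%:C * b%:C = (a * b)%:C.
Proof. rewrite !cplx_C cplx_mul; congr Complex; ring. Qed.
Lemma cplx_CB (R : realType) (a b : R) : (a - b)%:C = a%:C - b%:C.
Proof. by rewrite !cplx_C cplx_opp cplx_add oppr0 addr0. Qed.
Lemma Re_sum (R : realType) (T : finType) (f : T -> R[i]) :
  Re (\sum_s f s) = \sum_s Re (f s).
Proof. by apply: (big_morph (@Re R)) => // -[a b] [c e]. Qed.

Lemma z01_neq d n : (0 < d)%N -> (0 < n)%N -> (z0 : qbasis d n) != z1.
Proof. by move=> hd hn; apply/eqP => /ffunP /(_ (Ordinal hd, Ordinal hn)); rewrite !ffunE. Qed.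

Lemma flip_neq d n (s : qbasis d n) : (0 < d)%N -> (0 < n)%N -> s != flip s.
Proof.
move=> hd hn; apply/eqP => /ffunP /(_ (Ordinal hd, Ordinal hn)); rewrite ffunE.
by case: (s _).
Qed.

Lemma flip_z0 d n : flip (z0 : qbasis d n) = z1.
Proof. by apply/ffunP => q; rewrite !ffunE. Qed.
Lemma flip_z1 d n : flip (z1 : qbasis d n) = z0.
Proof. by apply/ffunP => q; rewrite !ffunE. Qed.

Lemma Hval_z0 (R : realType) d n (i : 'I_d) : Hval R i (z0 : qbasis d n) = 2^-1 * n%:R.
Proof.
rewrite /Hval; under eq_bigr => k _ do rewrite ffunE /zval /=.
by rewrite sumr_const card_ord.
Qed.
Lemma Hval_z1 (R : realType) d n (i : 'I_d) : Hval R i (z1 : qbasis d n) = 2^-1 * - n%:R.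
Proof.
rewrite /Hval; under eq_bigr => k _ do rewrite ffunE /zval /=.
by rewrite sumr_const card_ord mulNrn.
Qed.

Definition Ssum (R : realType) d (x : 'rV[R]_d) : R := \sum_(i < d) x 0 i.
Arguments Ssum {R d}.

Lemma phi_z0 (R : realType) d n (x : 'rV[R]_d) : phi x (z0 : qbasis d n) = 2^-1 * n%:R * Ssum x.
Proof.
rewrite /phi; under eq_bigr => i _ do rewrite Hval_z0.
by rewrite -mulr_suml mulrC.
Qed.
Lemma phi_z1 (R : realType) d n (x : 'rV[R]_d) : phi x (z1 : qbasis d n) = - (2^-1 * n%:R * Ssum x).
Proof.
rewrite /phi; under eq_bigr => i _ do rewrite Hval_z1.
by rewrite -mulr_suml mulrC mulrN mulNr.
Qed.

Lemma ghz_out (R : realType) d n (s : qbasis d n) : s != z0 -> s != z1 -> ghz R s = 0.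
Proof.
move=> h0 h1; rewrite /ghz; case: ifP => // /orP[] /eqP e.
  by move: h0; rewrite e /z0 eqxx.
by move: h1; rewrite e /z1 eqxx.
Qed.
Lemma ghz_z0 (R : realType) d n : ghz R (z0 : qbasis d n) = ((Num.sqrt (2:R))^-1)%:C.
Proof. by rewrite /ghz /z0 eqxx. Qed.
Lemma ghz_z1 (R : realType) d n : ghz R (z1 : qbasis d n) = ((Num.sqrt (2:R))^-1)%:C.
Proof. by rewrite /ghz /z1 eqxx orbT. Qed.

Lemma g2 (R : realType) : (Num.sqrt (2:R))^-1 * (Num.sqrt (2:R))^-1 = 2^-1.
Proof. by rewrite -invfM -expr2 sqr_sqrtr // ler0n. Qed.

Lemma gg (R : realType) :
  ((Num.sqrt (2:R))^-1)%:C * conjc (((Num.sqrt (2:R))^-1)%:C) = (2^-1 : R)%:C.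
Proof. by rewrite !cplx_C cplx_conj cplx_mul -g2; congr Complex; ring. Qed.

Definition pg (R : realType) d n (s : qbasis d n) : R :=
  if (s == z0) || (s == z1) then 2^-1 else 0.
Arguments pg R {d n}.

Lemma ghzproj_diag (R : realType) d n (s : qbasis d n) : ghzproj R s s = (pg R s)%:C.
Proof.
rewrite /ghzproj /pg conjE; case: (boolP ((s == z0) || (s == z1))) => h.
  case/orP: h => /eqP ->; by rewrite ?ghz_z0 ?ghz_z1 gg.
by case/norP: h => h0 h1; rewrite ghz_out // mul0r.
Qed.

Lemma rho0_diag (R : realType) d n (F : R) (s : qbasis d n) :
  rho0 F s s = (F * pg R s + (1 - F) / ((2 ^ (n * d))%:R - 1) * (1 - pg R s))%:C.
Proof.
rewrite /rho0 ghzproj_diag /opid eqxx.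
rewrite !cplx_C -[1 : R[i]]/(Complex 1 0).
congr Complex; ring.
Qed.

Lemma card_qb d n : #|{: qbasis d n}| = (2 ^ (n * d))%N.
Proof. by rewrite card_ffun card_prod !card_ord card_bool mulnC. Qed.

Lemma expect_MM (R : realType) d n (F : R) (x : 'rV[R]_d) :
  (0 < d)%N -> (0 < n)%N -> expect F (opmul (@Mop R d n) (@Mop R d n)) x = 1.
Proof.
move=> hd hn.
rewrite /expect MopMop /optr.
under eq_bigr => s _ do rewrite opmul_id rhoxE mulrAC expi_conj mul1r rho0_diag.
rewrite Re_sum /=.
rewrite big_split /= -mulr_sumr -mulr_sumr sumrB sumr_const card_qb.
have -> : \sum_(s : qbasis d n) pg R s = 1.
  rewrite (@sum_two _ _ z0 z1) ?z01_neq //.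
    by rewrite /pg eqxx /= eq_sym (negbTE (@z01_neq d n hd hn)) eqxx /=; field.
  by move=> s h0 h1; rewrite /pg (negbTE h0) (negbTE h1).
have hm : (2 ^ (n * d))%:R - 1 != 0 :> R.
  rewrite subr_eq0 pnatr_eq1 -{2}(expn0 2) eqn_exp2l //.
  by rewrite -lt0n muln_gt0 hn hd.
rewrite mulr1 divfK //; ring.
Qed.

Lemma rho0_flip (R : realType) d n (F : R) (s : qbasis d n) :
  (0 < d)%N -> (0 < n)%N ->
  rho0 F s (flip s) = (F - (1 - F) / ((2 ^ (n * d))%:R - 1))%:C * (ghz R s * conjc (ghz R (flip s))).
Proof.
move=> hd hn; rewrite /rho0 /opid (negbTE (@flip_neq d n s hd hn)) /ghzproj conjE cplx_CB.
ring.
Qed.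

Lemma expect_M (R : realType) d n (F : R) (x : 'rV[R]_d) :
  (0 < d)%N -> (0 < n)%N ->
  expect F (@Mop R d n) x = (F - (1 - F) / ((2 ^ (n * d))%:R - 1)) * cos (n%:R * Ssum x).
Proof.
move=> hd hn; rewrite /expect /optr.
under eq_bigr => s _ do rewrite opmulM rhoxE rho0_flip //.
rewrite (@sum_two _ _ z0 z1) ?z01_neq //; last first.
  by move=> s h0 h1; rewrite ghz_out // !(mul0r, mulr0).
rewrite flip_z0 flip_z1 ghz_z0 ghz_z1 gg cplx_CM.
rewrite Re_two phi_z0 phi_z1.
have -> : - (2^-1 * n%:R * Ssum x) - - - (2^-1 * n%:R * Ssum x) = - (n%:R * Ssum x) :> R by field.
rewrite cosN; move: ((1 - F) / ((2 ^ (n * d))%:R - 1)) => b; by field.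
Qed.

Lemma Ssum_shift (R : realType) d (x : 'rV[R]_d) (i : 'I_d) (t : R) :
  Ssum (x + t *: delta_mx 0 i) = Ssum x + t.
Proof.
rewrite /Ssum; under eq_bigr => j _ do rewrite !mxE.
rewrite big_split /= -mulr_sumr; congr (_ + _).
rewrite (bigD1 i) //= eqxx big1 ?addr0 ?mulr1 //.
by move=> j /negbTE ->.
Qed.

Lemma partial_M (R : realType) d n (F : R) (x : 'rV[R]_d) (i : 'I_d) :
  (0 < d)%N -> (0 < n)%N ->
  partial (expect F (@Mop R d n)) x i =
  - ((F - (1 - F) / ((2 ^ (n * d))%:R - 1)) * n%:R * sin (n%:R * Ssum x)).
Proof.
move=> hd hn; rewrite /partial.
have -> : (fun t => expect F (@Mop R d n) (x + t *: delta_mx 0 i)) =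
  (fun t => (F - (1 - F) / ((2 ^ (n * d))%:R - 1)) * cos (n%:R * (Ssum x + t))).
  by apply/funext => t; rewrite expect_M // Ssum_shift.
by rewrite deriv_cos_aff.
Qed.

Lemma dirgrad_M (R : realType) d n (F : R) (x : 'rV[R]_d) :
  (0 < d)%N -> (0 < n)%N ->
  dirgrad (@v1 R d) (expect F (@Mop R d n)) x =
  d%:R * ((Num.sqrt (d%:R : R))^-1 *
   - ((F - (1 - F) / ((2 ^ (n * d))%:R - 1)) * n%:R * sin (n%:R * Ssum x))).
Proof.
move=> hd hn; rewrite /dirgrad.
under eq_bigr => i _ do rewrite partial_M // /v1 mxE.
by rewrite sumr_const card_ord [in RHS]mulr_natl.
Qed.

Lemma theta1E (R : realType) d (x : 'rV[R]_d) :
  theta1 x = (Num.sqrt (d%:R : R))^-1 * Ssum x.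
Proof.
rewrite /theta1 /Ssum mulr_sumr; apply: eq_bigr => i _; by rewrite /v1 mxE.
Qed.

Lemma sin_sqr_le (R : realType) (y : R) : sin y ^+ 2 <= y ^+ 2.
Proof.
wlog hy : y / 0 <= y.
  move=> H; case: (leP 0 y) => [/H //|hy].
  have := H (- y); rewrite sinN !sqrrN; apply.
  by rewrite oppr_ge0 ltW.
case: (eqVneq y 0) => [->|y0]; first by rewrite sin0.
have ylt : 0 < y by rewrite lt_neqAle eq_sym y0 hy.
have h1 : forall z, z \in `]0, y[ -> is_derive z 1 (@sin R) (cos z).
  by move=> z _; exact: is_derive_sin.
have [|c0 _ h] := @MVT R sin cos 0 y ylt h1.
  exact/continuous_subspaceT/continuous_sin.
move: h; rewrite sin0 !subr0 => ->.
rewrite exprMn; apply: ler_piMl; first exact: sqr_ge0.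
have := sqr_ge0 (sin c0); rewrite cos2sin2; lra.
Qed.

Lemma cauchy2 (R : realType) d (x : 'rV[R]_d) :
  Ssum x ^+ 2 <= 2 * d%:R * \sum_(i < d) x 0 i ^+ 2.
Proof.
rewrite /Ssum expr2 mulr_suml.
have E : \sum_(i < d) \sum_(j < d) (x 0 i ^+ 2 + x 0 j ^+ 2) = 2 * d%:R * \sum_(i < d) x 0 i ^+ 2.
  under eq_bigr => i _ do rewrite big_split /= sumr_const card_ord.
  rewrite big_split /= sumrMnl sumr_const card_ord.
  rewrite -[_ *+ d]mulr_natl; ring.
rewrite -E; apply: ler_sum => i _; rewrite mulr_sumr; apply: ler_sum => j _.
have h := sqr_ge0 (x 0 i - x 0 j); have h2 := sqr_ge0 (x 0 i); have h3 := sqr_ge0 (x 0 j).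
rewrite sqrrB -mulr_natr in h.
set a := x 0 i in h h2 h3 *; set b := x 0 j in h h2 h3 *.
nra.
Qed.

Local Close Scope complex_scope.

Theorem mainTheorem7 (R : realType) (d n : nat) (F : R) :
  (2 <= d)%N -> (1 <= n)%N -> 0 <= F -> F < 1 ->
  F != ((2 ^ (n * d))%:R)^-1 ->
  let c := F - (1 - F) / ((2 ^ (n * d))%:R - 1) in
  (forall x : 'rV[R]_d,
     dirgrad (@v1 R d) (expect F (@Mop R d n)) x != 0 ->
     VarM n F x =
       (1 - c ^+ 2 * cos (n%:R * Num.sqrt (d%:R : R) * theta1 x) ^+ 2)
       / (d%:R * n%:R ^+ 2 * c ^+ 2
          * sin (n%:R * Num.sqrt (d%:R : R) * theta1 x) ^+ 2)) /\
  (forall A : R, exists2 delta : R, 0 < delta &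
     forall x : 'rV[R]_d, \sum_(i < d) x 0 i ^+ 2 < delta ->
       dirgrad (@v1 R d) (expect F (@Mop R d n)) x != 0 ->
       A < VarM n F x).
Proof.
move=> hd hn hF0 hF1 hF c.
have hd0 : (0 < d)%N by apply: ltnW.
have hn0 : (0 < n)%N by [].
have sd0 : 0 < Num.sqrt (d%:R : R) by rewrite sqrtr_gt0 ltr0n.
have sdn0 : Num.sqrt (d%:R : R) != 0 by rewrite gt_eqF.
have sd2 : Num.sqrt (d%:R : R) ^+ 2 = d%:R by rewrite sqr_sqrtr // ler0n.
have arg : forall x : 'rV[R]_d, n%:R * Num.sqrt (d%:R : R) * theta1 x = n%:R * Ssum x.
  by move=> x; rewrite theta1E mulrA mulfK.
have formula : forall x : 'rV[R]_d, VarM n F x =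
   (1 - c ^+ 2 * cos (n%:R * Ssum x) ^+ 2) /
   (d%:R * n%:R ^+ 2 * c ^+ 2 * sin (n%:R * Ssum x) ^+ 2).
  move=> x; rewrite /VarM expect_MM // expect_M // dirgrad_M // -/c.
  rewrite real_normK ?num_real //.
  move: sdn0 sd2; set sd := Num.sqrt (d%:R : R) => sdn0 sd2.
  rewrite -sd2; congr (_ / _); first by ring.
  by field.
split.
  by move=> x _; rewrite formula arg.
have hm4 : (4 : R) <= (2 ^ (n * d))%:R.
  rewrite -[4 : R]/((2 ^ 2)%:R) ler_nat leq_exp2l //.
  by rewrite -[2%N]/(1 * 2)%N leq_mul.
set q := (1 - F) / ((2 ^ (n * d))%:R - 1).
have hm1 : (2 ^ (n * d))%:R - 1 != 0 :> R by rewrite gt_eqF //; lra.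
have hq0 : 0 <= q by rewrite /q divr_ge0 //; lra.
have hqm : q * ((2 ^ (n * d))%:R - 1) = 1 - F by rewrite /q divfK.
have hq3 : 3 * q <= 1 - F.
  rewrite -hqm mulrC; apply: ler_wpM2l => //; lra.
have hc1 : c ^+ 2 < 1 by rewrite /c -/q; nra.
move=> A.
set K := 1 - c ^+ 2.
set D := d%:R * n%:R ^+ 2 : R.
set E := 2 * d%:R * n%:R ^+ 2 : R.
set t := `|A| + 1.
have K0 : 0 < K by rewrite /K; lra.
have D0 : 0 < D by rewrite /D mulr_gt0 // ?exprn_gt0 // ltr0n.
have E0 : 0 < E by rewrite /E !mulr_gt0 // ?exprn_gt0 // ltr0n.
have t0 : 0 < t by rewrite /t ltr_pwDr.
exists (K / (D * E * t)).
  by apply: divr_gt0 => //; apply: mulr_gt0 => //; apply: mulr_gt0.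
move=> x hx hg.
rewrite formula.
set s := sin (n%:R * Ssum x).
set co := cos (n%:R * Ssum x).
set Q := \sum_(i < d) x 0 i ^+ 2 in hx.
have hcs : c * s != 0.
  apply: contra hg => /eqP h; rewrite dirgrad_M // -/c -/s.
  apply/eqP; transitivity (- (d%:R * (Num.sqrt (d%:R : R))^-1 * n%:R) * (c * s)); first by ring.
  by rewrite h mulr0.
have P0 : 0 < (c * s) ^+ 2 by rewrite lt0r sqrf_eq0 hcs sqr_ge0.
have hs : s ^+ 2 <= E * Q.
  have h1 := @sin_sqr_le R (n%:R * Ssum x); rewrite -/s in h1.
  have h2 : (n%:R * Ssum x) ^+ 2 <= E * Q.
    rewrite exprMn (_ : E * Q = n%:R ^+ 2 * (2 * d%:R * Q)); last by rewrite /E; ring.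
    by apply: ler_wpM2l; [exact: sqr_ge0 | exact: cauchy2].
  move: h1 h2; set X := (n%:R * Ssum x) ^+ 2; lra.
have hco : co ^+ 2 <= 1 by have := sqr_ge0 s; rewrite /co /s cos2sin2; lra.
have hN : K <= 1 - c ^+ 2 * co ^+ 2.
  have := ler_wpM2l (sqr_ge0 c) hco; rewrite mulr1 => h; rewrite /K; lra.
have P1 : d%:R * n%:R ^+ 2 * c ^+ 2 * s ^+ 2 = D * (c * s) ^+ 2 by rewrite /D; ring.
have DP0 : 0 < D * (c * s) ^+ 2 by apply: mulr_gt0.
rewrite P1 ltr_pdivlMr //.
have h1 : A * (D * (c * s) ^+ 2) <= t * (D * (c * s) ^+ 2).
  apply: ler_wpM2r; first exact: ltW.
  by rewrite /t; have := ler_norm A; lra.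
have h2 : (c * s) ^+ 2 <= s ^+ 2.
  by rewrite exprMn; apply: ler_piMl; [exact: sqr_ge0 | exact: ltW].
have h3 : s ^+ 2 < E * (K / (D * E * t)).
  by apply: le_lt_trans hs _; rewrite ltr_pM2l.
have h4 : t * (D * (E * (K / (D * E * t)))) = K.
  field; apply/and3P; split; exact: lt0r_neq0.
have h5 : t * (D * (c * s) ^+ 2) < K.
  rewrite -[X in _ < X]h4 ltr_pM2l // ltr_pM2l //.
  exact: le_lt_trans h2 h3.
move: h1 h5 hN; set Y := D * (c * s) ^+ 2; lra.
Qed.
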